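(* Let $x, y, a, b$ be positive integers. Then there exists an amicable pair of lattice parallelograms, one with side lengths $x$ and $y$ and the other with side lengths $a$ and $b$, if and only if both $x^2y^2 - 4(a+b)^2$ and $a^2b^2 - 4(x+y)^2$ are squares of integers (zero allowed).
   Context: A lattice parallelogram is a parallelogram all of whose vertices lie on the integer lattice $\mathbb{Z}^2$. Two polygons form an amicable pair if the area of each equals the perimeter of the other (the two polygons are not required to be distinct). A parallelogram ''with side lengths $x$ and $y$'' has two sides of length $x$ and two sides of length $y$. *)

(* Defs.v *)
From Stdlib Require Import Reals ZArith.
Open Scope R_scope.

(* A lattice parallelogram: vertices p, p+u, p+u+v, p+v with p, u, v in Z^2,
   non-degenerate (u, v linearly independent). *)
Record lattice_parallelogram := LPar {
  lp_base : Z * Z;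
  lp_u : Z * Z;
  lp_v : Z * Z;
}.

Definition zdet (u v : Z * Z) : Z := (fst u * snd v - snd u * fst v)%Z.

Definition nondegenerate (P : lattice_parallelogram) : Prop :=
  zdet (lp_u P) (lp_v P) <> 0%Z.

Definition vlen (u : Z * Z) : R := sqrt (IZR (fst u * fst u + snd u * snd u)).

Definition area (P : lattice_parallelogram) : R := Rabs (IZR (zdet (lp_u P) (lp_v P))).

Definition perimeter (P : lattice_parallelogram) : R :=
  2 * (vlen (lp_u P) + vlen (lp_v P)).

Definition has_side_lengths (P : lattice_parallelogram) (x y : R) : Prop :=
  (vlen (lp_u P) = x /\ vlen (lp_v P) = y) \/ (vlen (lp_u P) = y /\ vlen (lp_v P) = x).

Definition amicable (P Q : lattice_parallelogram) : Prop :=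
  area P = perimeter Q /\ area Q = perimeter P.

Definition is_Zsquare (n : Z) : Prop := exists s : Z, n = (s * s)%Z.

(* Main.v *)
Require Import Defs.
From Stdlib Require Import Reals ZArith Lia Psatz.
Open Scope Z_scope.

Definition gm (p q : Z*Z) : Z*Z := (fst p*fst q - snd p*snd q, fst p*snd q + snd p*fst q).
Definition ga (p q : Z*Z) : Z*Z := (fst p + fst q, snd p + snd q).
Definition gn (p : Z*Z) : Z := fst p*fst p + snd p*snd p.
Definition gc (p : Z*Z) : Z*Z := (fst p, - snd p).
Definition gd (d w : Z*Z) : Prop := exists q, w = gm d q.

Ltac gsimpl := repeat match goal with p : (Z*Z)%type |- _ => destruct p end;
  unfold gm, ga, gn, gc in *; cbn [fst snd] in *;
  try match goal with |- (_,_) = (_,_) => f_equal end; ring.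

Lemma gn_nonneg p : 0 <= gn p.
Proof. destruct p; unfold gn; simpl; nia. Qed.

Lemma gn_zero p : gn p = 0 -> p = (0,0).
Proof. destruct p as [p1 p2]; unfold gn; simpl; intros; f_equal; nia. Qed.

Lemma gn_mul p q : gn (gm p q) = gn p * gn q.
Proof. gsimpl. Qed.

Lemma gd_add d a b : gd d a -> gd d b -> gd d (ga a b).
Proof. intros [q1 ->] [q2 ->]. exists (ga q1 q2). gsimpl. Qed.

Lemma gd_mul d a c : gd d a -> gd d (gm c a).
Proof. intros [q1 ->]. exists (gm c q1). gsimpl. Qed.

Lemma gd_refl d : gd d d.
Proof. exists (1,0). gsimpl. Qed.

Lemma gd_zero d : gd d (0,0).
Proof. exists (0,0). gsimpl. Qed.

Lemma half_div (A n : Z) : 0 < n -> exists q, -n <= 2*(A - n*q) <= n.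
Proof.
  intros Hn. exists ((2*A + n) / (2*n)).
  pose proof (Z.div_mod (2*A+n) (2*n) ltac:(lia)).
  pose proof (Z.mod_pos_bound (2*A+n) (2*n) ltac:(lia)).
  lia.
Qed.

Lemma gdivision (a d : Z*Z) : d <> (0,0) ->
  exists q r, a = ga (gm q d) r /\ gn r < gn d.
Proof.
  intros Hd.
  assert (Hn : 0 < gn d).
  { pose proof (gn_nonneg d). destruct (Z.eq_dec (gn d) 0) as [E|E].
    - apply gn_zero in E. contradiction.
    - lia. }
  set (n := gn d) in *.
  destruct (half_div (fst (gm a (gc d))) n Hn) as [q1 Hq1].
  destruct (half_div (snd (gm a (gc d))) n Hn) as [q2 Hq2].
  set (q := (q1,q2)).
  exists q, (fst a - fst (gm q d), snd a - snd (gm q d)).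
  split. { subst q. gsimpl. }
  set (r := (fst a - fst (gm q d), snd a - snd (gm q d))).
  assert (E1 : fst (gm r (gc d)) = fst (gm a (gc d)) - n*q1) by (subst r q n; gsimpl).
  assert (E2 : snd (gm r (gc d)) = snd (gm a (gc d)) - n*q2) by (subst r q n; gsimpl).
  assert (E3 : gn (gm r (gc d)) = gn r * n).
  { rewrite gn_mul. subst n. f_equal. gsimpl. }
  unfold gn at 1 in E3. rewrite E1, E2 in E3.
  pose proof (gn_nonneg r).
  nia.
Qed.

Lemma bezout_aux (n : nat) : forall w z, (Z.to_nat (gn z) < n)%nat ->
  exists d al be, gd d w /\ gd d z /\ d = ga (gm al w) (gm be z).
Proof.
  induction n as [|n IH]; intros w z Hz; [lia|].
  destruct (Z.eq_dec (gn z) 0) as [E|E].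
  - apply gn_zero in E. subst z. exists w, (1,0), (0,0).
    split; [apply gd_refl|]. split; [apply gd_zero|]. gsimpl.
  - assert (Hz0 : z <> (0,0)) by (intro; subst; unfold gn in E; simpl in E; lia).
    destruct (gdivision w z Hz0) as [q [r [Hw Hr]]].
    pose proof (gn_nonneg r).
    destruct (IH z r ltac:(lia)) as [d [al [be [H1 [H2 H3]]]]].
    exists d, be, (ga al (gm (-1,0) (gm be q))).
    split.
    + rewrite Hw. apply gd_add; [|exact H2].
      destruct H1 as [c ->]. exists (gm c q). gsimpl.
    + split; [exact H1|].
      rewrite H3, Hw. gsimpl.
Qed.

Lemma gcancel d X Y : d <> (0,0) -> gm d X = gm d Y -> X = Y.
Proof.
  intros Hd H.
  assert (E : gm d (fst X - fst Y, snd X - snd Y) = (0,0)).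
  { destruct d, X, Y. unfold gm in *; simpl in *. injection H; intros.
    f_equal; nia. }
  assert (gn (gm d (fst X - fst Y, snd X - snd Y)) = 0) by (rewrite E; reflexivity).
  rewrite gn_mul in H0.
  pose proof (gn_nonneg d).
  destruct (Z.eq_dec (gn d) 0) as [E0|E0]; [apply gn_zero in E0; contradiction|].
  assert (gn (fst X - fst Y, snd X - snd Y) = 0) by nia.
  apply gn_zero in H2. destruct X, Y; simpl in *. injection H2; intros.
  f_equal; lia.
Qed.

Lemma step (al be w z : Z*Z) (k : Z) : ga (gm al w) (gm be z) = (1,0) ->
  gn w = gn z * k ->
  gc w = gm z (ga (gm al (gm (gc z) (k,0))) (gm be (gc w))).
Proof.
  intros H1 H2.
  transitivity (gm (ga (gm al w) (gm be z)) (gc w)). { rewrite H1. gsimpl. }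
  transitivity (ga (gm al (gn w, 0)) (gm z (gm be (gc w)))). { gsimpl. }
  rewrite H2. gsimpl.
Qed.

Lemma claimG w z k : z <> (0,0) -> gn w = gn z * k ->
  exists u v, w = gm u v /\ gn u = gn z.
Proof.
  intros Hz Hk.
  destruct (bezout_aux (S (Z.to_nat (gn z))) w z ltac:(lia)) as [d [al [be [[w1 Hw] [[z1 Hz1] Hd]]]]].
  assert (Hd0 : d <> (0,0)) by (intro HH; apply Hz; rewrite Hz1, HH; gsimpl).
  assert (Hc : ga (gm al w1) (gm be z1) = (1,0)).
  { apply (gcancel d); auto. rewrite Hw, Hz1 in Hd. 
    transitivity d; [|gsimpl]. rewrite Hd at 2. gsimpl. }
  assert (Hnd : 0 < gn d).
  { pose proof (gn_nonneg d). destruct (Z.eq_dec (gn d) 0) as [E|E];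
    [apply gn_zero in E; contradiction|lia]. }
  assert (Hk1 : gn w1 = gn z1 * k).
  { rewrite Hw, Hz1, !gn_mul in Hk. nia. }
  pose proof (step _ _ _ _ _ Hc Hk1) as Hs.
  set (c := ga (gm al (gm (gc z1) (k,0))) (gm be (gc w1))) in *.
  exists (gm d (gc z1)), (gc c).
  split.
  - rewrite Hw. assert (w1 = gc (gc w1)) by gsimpl. rewrite H, Hs. gsimpl.
  - rewrite Hz1, !gn_mul. f_equal. gsimpl.
Qed.

Lemma vlen_eq (p : Z*Z) (x : Z) : 0 < x -> fst p*fst p + snd p*snd p = x*x ->
  vlen p = IZR x.
Proof.
  intros Hx H. unfold vlen. rewrite H, mult_IZR. apply sqrt_square.
  apply IZR_le. lia.
Qed.

Lemma vlen_inv (p : Z*Z) (x : Z) : 0 < x -> vlen p = IZR x ->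
  fst p*fst p + snd p*snd p = x*x.
Proof.
  intros Hx H. unfold vlen in H.
  assert (Hn : (0 <= IZR (fst p * fst p + snd p * snd p))%R) by (apply IZR_le; nia).
  apply eq_IZR. rewrite <- (sqrt_sqrt _ Hn), H, mult_IZR. reflexivity.
Qed.

Lemma construct x y T s : 0<x -> 0<y -> 0<T -> x*x*(y*y) - T*T = s*s ->
  exists P, vlen (lp_u P) = IZR x /\ vlen (lp_v P) = IZR y /\ zdet (lp_u P) (lp_v P) = T.
Proof.
  intros Hx Hy HT H.
  destruct (claimG (s,T) (x,0) (y*y)) as [u [v [Hw Hu]]].
  { intro E. injection E. lia. }
  { unfold gn; cbn [fst snd]. lia. }
  assert (Hv : gn v = y*y).
  { assert (gn (s,T) = gn u * gn v) by (rewrite Hw; apply gn_mul).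
    rewrite Hu in H0. unfold gn at 1 2 in H0; cbn [fst snd] in H0.
    apply (Z.mul_reg_l _ _ (x*x)); nia. }
  exists (LPar (0,0) (gc u) v). cbn [lp_u lp_v]. split; [|split].
  - apply vlen_eq; auto. unfold gn in Hu; cbn [fst snd] in Hu. destruct u; unfold gc; cbn [fst snd] in *. lia.
  - apply vlen_eq; auto.
  - assert (E : T = snd (gm u v)) by (rewrite <- Hw; reflexivity).
    rewrite E. destruct u, v. unfold zdet, gc, gm. cbn [fst snd]. ring.
Qed.

Lemma lagrange (u v : Z*Z) : (fst u*fst u + snd u*snd u)*(fst v*fst v + snd v*snd v)
  - zdet u v * zdet u v = (fst u*fst v + snd u*snd v)*(fst u*fst v + snd u*snd v).
Proof. unfold zdet. ring. Qed.

Lemma perim_eq (Q : lattice_parallelogram) a b : has_side_lengths Q (IZR a) (IZR b) ->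
  perimeter Q = (2 * (IZR a + IZR b))%R.
Proof. unfold perimeter. intros [[-> ->]|[-> ->]]; ring. Qed.

Lemma area_eq (P : lattice_parallelogram) a b : 0 < a -> 0 < b ->
  area P = (2 * (IZR a + IZR b))%R -> zdet (lp_u P) (lp_v P) * zdet (lp_u P) (lp_v P) = 4*((a+b)*(a+b)).
Proof.
  unfold area. intros ha hb H.
  assert (H2 : (IZR (zdet (lp_u P) (lp_v P)) * IZR (zdet (lp_u P) (lp_v P)) = (2 * (IZR a + IZR b))*(2 * (IZR a + IZR b)))%R).
  { rewrite <- H. rewrite <- Rabs_mult. rewrite Rabs_pos_eq; [reflexivity|]. apply Rle_0_sqr. }
  rewrite <- !plus_IZR, <- !mult_IZR in H2. apply eq_IZR in H2. lia.
Qed.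

Lemma fwd (P Q : lattice_parallelogram) x y a b : 0<x -> 0<y -> 0<a -> 0<b ->
  has_side_lengths P (IZR x) (IZR y) -> has_side_lengths Q (IZR a) (IZR b) ->
  area P = perimeter Q -> is_Zsquare (x ^ 2 * y ^ 2 - 4 * (a + b) ^ 2).
Proof.
  intros hx hy ha hb HP HQ HA.
  rewrite (perim_eq Q a b HQ) in HA.
  pose proof (area_eq P a b ha hb HA) as Hd.
  destruct P as [pb u v]; cbn [lp_u lp_v] in *.
  exists (fst u*fst v + snd u*snd v). rewrite <- lagrange, Hd.
  destruct HP as [[H1 H2]|[H1 H2]]; cbn [lp_u lp_v] in *.
  - rewrite (vlen_inv _ _ hx H1), (vlen_inv _ _ hy H2). rewrite !Z.pow_2_r. ring.
  - rewrite (vlen_inv _ _ hy H1), (vlen_inv _ _ hx H2). rewrite !Z.pow_2_r. ring.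
Qed.

Close Scope Z_scope.
Open Scope R_scope.

Theorem theorem1 (x y a b : Z) (hx : (0 < x)%Z) (hy : (0 < y)%Z)
  (ha : (0 < a)%Z) (hb : (0 < b)%Z) :
  (exists P Q : lattice_parallelogram,
      nondegenerate P /\ nondegenerate Q /\
      has_side_lengths P (IZR x) (IZR y) /\ has_side_lengths Q (IZR a) (IZR b) /\
      amicable P Q)
  <->
  (is_Zsquare (x ^ 2 * y ^ 2 - 4 * (a + b) ^ 2)%Z /\
   is_Zsquare (a ^ 2 * b ^ 2 - 4 * (x + y) ^ 2)%Z).
Proof.
  split.
  - intros [P [Q [_ [_ [HP [HQ [A1 A2]]]]]]]. split.
    + exact (fwd P Q x y a b hx hy ha hb HP HQ A1).
    + exact (fwd Q P a b x y ha hb hx hy HQ HP A2).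
  - intros [[s Hs] [t Ht]]. rewrite !Z.pow_2_r in Hs, Ht.
    destruct (construct x y (2*(a+b)) s hx hy ltac:(lia) ltac:(lia)) as [P [P1 [P2 P3]]].
    destruct (construct a b (2*(x+y)) t ha hb ltac:(lia) ltac:(lia)) as [Q [Q1 [Q2 Q3]]].
    exists P, Q.
    split; [unfold nondegenerate; lia|].
    split; [unfold nondegenerate; lia|].
    split; [left; auto|].
    split; [left; auto|].
    unfold amicable, area, perimeter.
    rewrite P1, P2, P3, Q1, Q2, Q3.
    rewrite !Rabs_pos_eq by (apply IZR_le; lia).
    rewrite !mult_IZR, !plus_IZR. split; reflexivity.
Qed.
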